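(* Let $H$ be a Mealy machine from $X$ to $Y$ and $M$ a Mealy machine from $X$ to $Z$ such that for all $\overline{x},\overline{x}'\in X^*$, $\lambda_H(\overline{x})=\lambda_H(\overline{x}')$ implies $\lambda_M(\overline{x})=\lambda_M(\overline{x}')$. Define the observation machine $N$ from $Y$ to $Z$ as follows: $S_N$ is the set of pairs $(s_H,s_M)\in S_H\times S_M$ such that $\delta_H(\overline{x})=s_H$ and $\delta_M(\overline{x})=s_M$ for some $\overline{x}\in X^*$; $r_N=(r_H,r_M)$; for $(s_H,s_M)\in S_N$ and $y\in Y$ let $V=\{x\in X:\lambda_H(s_H,x)=y\}$; if $V=\emptyset$ then $((s_H,s_M),y)\notin D_N$; otherwise $((s_H,s_M),y)\in D_N$, $\lambda_N((s_H,s_M),y)$ is the common value of $\lambda_M(s_M,x)$ for $x\in V$, and $\Delta_N((s_H,s_M),y)=\{(\delta_H(s_H,x),\delta_M(s_M,x)):x\in V\}$. Then $N$ is well defined, and a Mealy machine $T$ from $Y$ to $Z$ satisfies $T\circ H\equiv M$ if and only if $T$ implements $N$.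
   Context: A Mealy machine from $X$ to $Y$ is a tuple $(X,Y,S,\delta,\lambda,r)$ with $\delta:S\times X\to S$, $\lambda:S\times X\to Y$ total; $\delta(\overline{x}),\lambda(\overline{x})$ denote the state reached and output word produced on input $\overline{x}$ from $r$. $T\circ H$ is the cascade: states $S_H\times S_T$, initial $(r_H,r_T)$, and with $y=\lambda_H(s_H,x)$, $\delta((s_H,s_T),x)=(\delta_H(s_H,x),\delta_T(s_T,y))$, $\lambda((s_H,s_T),x)=\lambda_T(s_T,y)$; $\equiv$ means same output on every input word. An observation machine (OM) from $Y$ to $Z$ is a tuple $(Y,Z,S,D,\Delta,\lambda,r)$ with $D\subseteq S\times Y$, $\Delta:D\to 2^S\setminus\{\emptyset\}$, $\lambda:D\to Z$. A run on $y_0\dots y_n$ from $s_0$ is $s_0,y_0,z_0,s_1,\dots,s_{n+1}$ with $(s_i,y_i)\in D$, $s_{i+1}\in\Delta(s_i,y_i)$, $z_i=\lambda(s_i,y_i)$; $\Omega_N$ is the set of words having a run from $r$; when all runs from $r$ on each $\overline{y}\in\Omega_N$ have the same output $\lambda_N(\overline{y})$, a Mealy machine $T$ implements $N$ if $\lambda_T(\overline{y})=\lambda_N(\overline{y})$ for all $\overline{y}\in\Omega_N$. *)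

(* Defs.v *)
From Stdlib Require Import List ClassicalEpsilon.
Import ListNotations.
Set Implicit Arguments.

Record Mealy (X Y : Type) := {
  mstate : Type;
  mdelta : mstate -> X -> mstate;
  mlambda : mstate -> X -> Y;
  mroot : mstate }.
Arguments mstate {X Y}. Arguments mdelta {X Y}. Arguments mlambda {X Y}.
Arguments mroot {X Y}.

Fixpoint dstar {X Y} (M : Mealy X Y) (s : mstate M) (xs : list X) : mstate M :=
  match xs with [] => s | x :: xs' => dstar M (mdelta M s x) xs' end.
Fixpoint lstar {X Y} (M : Mealy X Y) (s : mstate M) (xs : list X) : list Y :=
  match xs with
  | [] => []
  | x :: xs' => mlambda M s x :: lstar M (mdelta M s x) xs'
  end.

Definition reach {X Y} (M : Mealy X Y) (xs : list X) := dstar M (mroot M) xs.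
Definition out {X Y} (M : Mealy X Y) (xs : list X) := lstar M (mroot M) xs.

Definition cascade {X Y Z} (T : Mealy Y Z) (H : Mealy X Y) : Mealy X Z := {|
  mstate := mstate H * mstate T;
  mdelta := fun p x => (mdelta H (fst p) x, mdelta T (snd p) (mlambda H (fst p) x));
  mlambda := fun p x => mlambda T (snd p) (mlambda H (fst p) x);
  mroot := (mroot H, mroot T) |}.

Definition mequiv {X Z} (M1 M2 : Mealy X Z) : Prop :=
  forall xs, out M1 xs = out M2 xs.

(** Observation machines (Y, Z, S, D, Delta, lambda, r):
    D subset of S x Y, Delta : D -> nonempty subsets of S, lambda : D -> Z. *)
Record OM (Y Z : Type) := {
  ostate : Type;
  oD : ostate -> Y -> Prop;
  oDelta : ostate -> Y -> ostate -> Prop;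
  olambda : forall s y, oD s y -> Z;
  oroot : ostate;
  oDelta_ne : forall s y, oD s y -> exists s', oDelta s y s' }.
Arguments ostate {Y Z}. Arguments oD {Y Z}. Arguments oDelta {Y Z}.
Arguments olambda {Y Z}. Arguments oroot {Y Z}.

Inductive orun {Y Z} (N : OM Y Z) : ostate N -> list Y -> list Z -> Prop :=
| orun_nil s : orun N s [] []
| orun_cons s y ys z zs s' (h : oD N s y) :
    z = olambda N s y h -> oDelta N s y s' -> orun N s' ys zs ->
    orun N s (y :: ys) (z :: zs).

Definition Omega {Y Z} (N : OM Y Z) (ys : list Y) : Prop :=
  exists zs, orun N (oroot N) ys zs.

Definition out_determined {Y Z} (N : OM Y Z) : Prop :=
  forall ys zs zs', orun N (oroot N) ys zs -> orun N (oroot N) ys zs' -> zs = zs'.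

(** T implements N: lambda_T(ys) = lambda_N(ys) for all ys in Omega_N,
    where lambda_N(ys) is the output of (any) run of N from r on ys. *)
Definition implements {Y Z} (T : Mealy Y Z) (N : OM Y Z) : Prop :=
  forall ys zs, orun N (oroot N) ys zs -> out T ys = zs.

Section ObsN.
Variables (X Y Z : Type) (H : Mealy X Y) (M : Mealy X Z).

Definition reachable (p : mstate H * mstate M) : Prop :=
  exists xs, reach H xs = fst p /\ reach M xs = snd p.

Definition SN := { p : mstate H * mstate M | reachable p }.

Definition rootN : SN :=
  exist _ (mroot H, mroot M) (ex_intro _ [] (conj eq_refl eq_refl)).

Definition DN (s : SN) (y : Y) : Prop :=
  exists x, mlambda H (fst (proj1_sig s)) x = y.

Definition DeltaN (s : SN) (y : Y) (t : SN) : Prop :=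
  exists x, mlambda H (fst (proj1_sig s)) x = y /\
    proj1_sig t = (mdelta H (fst (proj1_sig s)) x, mdelta M (snd (proj1_sig s)) x).

(** lambda_N(s, y) := lambda_M(s_M, x) for some x in V (the statement asserts
    that this value does not depend on the choice of x). *)
Definition lamN (s : SN) (y : Y) (h : DN s y) : Z :=
  mlambda M (snd (proj1_sig s)) (proj1_sig (constructive_indefinite_description _ h)).

Lemma dstar_snoc {A B} (K : Mealy A B) s xs x :
  dstar K s (xs ++ [x]) = mdelta K (dstar K s xs) x.
Proof. revert s; induction xs as [|a xs IH]; intro s; simpl; auto. Qed.

Lemma DeltaN_ne : forall s y, DN s y -> exists t, DeltaN s y t.
Proof.
  intros [[sH sM] [xs [E1 E2]]] y [x Hx]; simpl in *.
  assert (R : reachable (mdelta H sH x, mdelta M sM x)).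
  { exists (xs ++ [x]); unfold reach in *; simpl.
    rewrite !dstar_snoc, E1, E2; split; reflexivity. }
  exists (exist _ _ R); exists x; simpl; split; auto.
Qed.

Definition obsN : OM Y Z := {|
  ostate := SN; oD := DN; oDelta := DeltaN; olambda := lamN;
  oroot := rootN; oDelta_ne := DeltaN_ne |}.

End ObsN.
Arguments obsN {X Y Z}.

(* Main.v *)
Require Import Defs.
From Stdlib Require Import List.
Import ListNotations.

Lemma lstar_snoc {A B} (K : Mealy A B) s xs x :
  lstar K s (xs ++ [x]) = lstar K s xs ++ [mlambda K (dstar K s xs) x].
Proof. revert s; induction xs as [|a xs IH]; intro s; simpl; auto. rewrite IH; auto. Qed.

Lemma lstar_cascade {X Y Z} (T : Mealy Y Z) (H : Mealy X Y) xs :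
  forall sH sT, lstar (cascade T H) (sH, sT) xs = lstar T sT (lstar H sH xs).
Proof. induction xs as [|x xs IH]; intros; simpl; auto. rewrite IH; auto. Qed.

Section P.
Variables (X Y Z : Type) (H : Mealy X Y) (M : Mealy X Z).
Hypothesis hHM : forall xs xs' : list X, out H xs = out H xs' -> out M xs = out M xs'.

Lemma wd : forall (s : ostate (obsN H M)) (y : Y) (x x' : X),
      mlambda H (fst (proj1_sig s)) x = y ->
      mlambda H (fst (proj1_sig s)) x' = y ->
      mlambda M (snd (proj1_sig s)) x = mlambda M (snd (proj1_sig s)) x'.
Proof.
  intros [[sH sM] [xs [E1 E2]]] y x x' h1 h2; simpl in *.
  assert (K := hHM (xs ++ [x]) (xs ++ [x'])).
  unfold out, reach in *. rewrite !lstar_snoc, E1, E2 in K.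
  specialize (K ltac:(rewrite h1, h2; reflexivity)).
  apply app_inj_tail in K. destruct K as [_ K]. congruence.
Qed.

Lemma run_sound : forall (s : ostate (obsN H M)) ys zs, orun (obsN H M) s ys zs ->
  exists xs, lstar H (fst (proj1_sig s)) xs = ys /\ lstar M (snd (proj1_sig s)) xs = zs.
Proof.
  induction 1 as [s|s y ys z zs s' h Ez HD Hr IH].
  - exists []; auto.
  - destruct IH as [xs [E1 E2]].
    destruct HD as [x [Hx Et]].
    exists (x :: xs). simpl. rewrite Et in E1, E2. simpl in E1, E2.
    rewrite Hx, E1, E2. split; auto. f_equal.
    subst z. simpl. unfold lamN.
    destruct (ClassicalEpsilon.constructive_indefinite_description _ h) as [x0 Hx0]; simpl.
    apply (wd s y x x0); auto.
Qed.

Lemma run_complete : forall xs (s : ostate (obsN H M)),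
  orun (obsN H M) s (lstar H (fst (proj1_sig s)) xs) (lstar M (snd (proj1_sig s)) xs).
Proof.
  induction xs as [|x xs IH]; intros s.
  - constructor.
  - destruct s as [[sH sM] Rs] eqn:Es. simpl.
    assert (R : @reachable _ _ _ H M (mdelta H sH x, mdelta M sM x)).
    { destruct Rs as [w [E1 E2]]. exists (w ++ [x]); unfold reach in *; simpl in *.
      rewrite !dstar_snoc, E1, E2; split; reflexivity. }
    assert (h : DN s (mlambda H sH x)) by (exists x; subst s; reflexivity).
    subst s.
    apply (@orun_cons _ _ (obsN H M) _ _ _ _ _ (exist _ _ R) h).
    + simpl. unfold lamN.
      destruct (ClassicalEpsilon.constructive_indefinite_description _ h) as [x0 Hx0]; simpl.
      apply (wd (exist _ (sH, sM) Rs) (mlambda H sH x) x x0); auto.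
    + exists x; simpl; auto.
    + apply (IH (exist _ _ R)).
Qed.
End P.

Theorem proposition2 (X Y Z : Type) (H : Mealy X Y) (M : Mealy X Z)
  (hHM : forall xs xs' : list X, out H xs = out H xs' -> out M xs = out M xs') :
  (* N is well defined: lambda_N is independent of the choice of x in V ... *)
  (forall (s : ostate (obsN H M)) (y : Y) (x x' : X),
      mlambda H (fst (proj1_sig s)) x = y ->
      mlambda H (fst (proj1_sig s)) x' = y ->
      mlambda M (snd (proj1_sig s)) x = mlambda M (snd (proj1_sig s)) x') /\
  (* ... and all runs from r_N on a word have the same output *)
  out_determined (obsN H M) /\
  (forall T : Mealy Y Z, mequiv (cascade T H) M <-> implements T (obsN H M)).
Proof.
  split; [exact (@wd X Y Z H M hHM)|]. split.
  - intros ys zs zs' R1 R2.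
    destruct (@run_sound X Y Z H M hHM _ _ _ R1) as [xs [A1 A2]].
    destruct (@run_sound X Y Z H M hHM _ _ _ R2) as [xs' [B1 B2]].
    simpl in *. subst.
    apply hHM. unfold out. congruence.
  - intros T; split.
    + intros Heq ys zs R.
      destruct (@run_sound X Y Z H M hHM _ _ _ R) as [xs [A1 A2]]. simpl in *. subst.
      specialize (Heq xs). unfold out in Heq. simpl in Heq.
      rewrite lstar_cascade in Heq. exact Heq.
    + intros Him xs. unfold out; simpl. rewrite lstar_cascade.
      apply Him. exact (@run_complete X Y Z H M hHM xs (rootN H M)).
Qed.
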